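(* Let $m_1 > m_2 > \dots > m_k$ be a hierarchy of measures as in the context, and let $0 \le s < e \le 1440$ with $T = e - s$. Then the Timehash index key set $H(s,e)$ satisfies $$|H(s,e)| \le \left\lfloor \frac{T}{m_1} \right\rfloor + 1 + B, \qquad B = 2\sum_{i=2}^{k}\left(\frac{m_{i-1}}{m_i} - 1\right),$$ where $B$ depends only on the hierarchy; in particular $|H(s,e)| = O(T/m_1)$. For the hierarchy $(m_1,\dots,m_5) = (240,60,15,5,1)$ one has $B = 24$.
   Context: Time of day is measured in minutes since midnight, $\{0,1,\dots,1439\}$. A hierarchy of measures is a sequence of positive integers $m_1 > m_2 > \dots > m_k$ with $m_k = 1$, $m_i$ dividing $m_{i-1}$ for $2 \le i \le k$, and $m_1$ dividing $1440$. A level-$i$ block is a set of minutes $[a, a+m_i) = \{a, \dots, a+m_i-1\}$ with $a$ a nonnegative multiple of $m_i$ and $a + m_i \le 1440$; its key is the pair $(i,a)$. Every level-$i$ block with $i \ge 2$ is contained in a unique level-$(i-1)$ block, its parent. For a range $0 \le s < e \le 1440$ (the minutes $s,\dots,e-1$), the index key set $H(s,e)$ is the set of keys of all blocks $B$ (at any level) such that $B \subseteq [s,e)$ and either $B$ is at level 1 or the parent of $B$ is not contained in $[s,e)$ (the decomposition into complete coarsest blocks inside the range, with partially covered boundary blocks recursively refined at finer levels). *)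

(* Defs.v *)
From mathcomp Require Import all_boot all_order.
Set Implicit Arguments. Unset Strict Implicit. Unset Printing Implicit Defensive.

(* A hierarchy of measures is the list ms = [:: m_1; ...; m_k].
   Levels are 0-indexed in Rocq: level i (0 <= i < k) has measure nth 0 ms i,
   i.e. the paper's level i+1. *)
Definition meas (ms : seq nat) (i : nat) : nat := nth 0 ms i.

Definition hierarchy (ms : seq nat) : Prop :=
  [/\ 0 < size ms,
      sorted (fun x y => y < x) ms,
      last 0 ms = 1,
      (forall i, 0 < i < size ms -> meas ms i %| meas ms i.-1)
    & head 0 ms %| 1440].

Definition is_block (ms : seq nat) (i a : nat) : bool :=
  (meas ms i %| a) && (a + meas ms i <= 1440).

Definition in_range (s e a m : nat) : bool := (s <= a) && (a + m <= e).

Definition parent_start (ms : seq nat) (i a : nat) : nat :=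
  a %/ meas ms i.-1 * meas ms i.-1.

(* The index key set H(s,e): keys (i, a) (i 0-indexed level, a start minute). *)
Definition Hset (ms : seq nat) (s e : nat) : {set 'I_(size ms) * 'I_1440} :=
  [set x : 'I_(size ms) * 'I_1440 |
     let i := nat_of_ord x.1 in let a := nat_of_ord x.2 in
     [&& is_block ms i a, in_range s e a (meas ms i)
       & (i == 0) || ~~ in_range s e (parent_start ms i a) (meas ms i.-1)]].

(* B = 2 * sum_{i=2}^k (m_{i-1}/m_i - 1)  (exact division by hierarchy). *)
Definition Bconst (ms : seq nat) : nat :=
  2 * \sum_(1 <= i < size ms) (meas ms i.-1 %/ meas ms i - 1).

(* Main.v *)
Require Import Defs.
From mathcomp Require Import all_boot all_order zify.
Lemma mult_bound (m lo n : nat) (A : {set 'I_1440}) : 0 < m -> m %| lo ->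
  (forall a : 'I_1440, a \in A -> m %| a /\ lo <= a < lo + n * m) -> #|A| <= n.
Proof.
move=> m0 dlo H.
pose g (j : 'I_n) : 'I_1440 := inord (lo + j * m).
have sub : A \subset g @: setT.
  apply/subsetP=> a aA; have [da /andP[h1 h2]] := H a aA.
  have dj : m %| a - lo by apply: dvdn_sub.
  have jn : (a - lo) %/ m < n by rewrite ltn_divLR //; lia.
  apply/imsetP; exists (Ordinal jn) => //.
  have := ltn_ord a => ha; apply: val_inj; rewrite /g /= divnK // inordK; lia.
by apply: leq_trans (subset_leq_card sub) _; rewrite (leq_trans (leq_imset_card _ _)) // cardsT card_ord.
Qed.

Lemma lvl0 (m s e a : nat) : 0 < m -> s <= a -> a + m <= e -> a < s %/ m * m + ((e - s) %/ m + 1) * m.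
Proof.
move=> m0 h1 h2.
have := divn_eq s m; have := divn_eq (e - s) m; have := ltn_pmod s m0; have := ltn_pmod (e-s) m0.
rewrite mulnDl mul1n.
set x := s %/ m * m; set y := (e - s) %/ m * m. lia.
Qed.
Lemma div_eq (M q y : nat) : 0 < M -> q * M <= y < q * M + M -> y %/ M = q.
Proof.
move=> M0 /andP[h1 h2]; apply/eqP; rewrite eqn_leq leq_divRL // h1 andbT -ltnS ltn_divLR //.
by rewrite mulSn addnC.
Qed.

Lemma decomp (m r a : nat) : 0 < m -> 0 < r -> m %| a ->
  exists x, a = a %/ (r * m) * (r * m) + x * m /\ x < r.
Proof.
move=> m0 r0 /dvdnP[y ->]; exists (y %% r); split.
  by rewrite mulnA divnMr // -mulnDl -divn_eq.
by rewrite ltn_pmod.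
Qed.

Lemma lvlA (m r s e a : nat) : 0 < m -> 0 < r -> m %| a -> s <= a ->
  a %/ (r * m) * (r * m) < s ->
  s %/ (r * m) * (r * m) + m <= a < s %/ (r * m) * (r * m) + m + (r - 1) * m.
Proof.
move=> m0 r0 da sa ps.
have [x [ha xr]] := @decomp m r a m0 r0 da.
have M0 : 0 < r * m by rewrite muln_gt0 r0.
have -> : s %/ (r * m) = a %/ (r * m).
  apply: div_eq => //; apply/andP; split; first lia.
  have : x * m < r * m by rewrite ltn_mul2r m0.
  lia.
have x1 : 0 < x by case: x ha {xr}; [lia|].
have h1 : m <= x * m by rewrite leq_pmull.
have h2 : x * m <= (r - 1) * m by rewrite leq_mul2r; apply/orP; right; lia.
have h3 : (r - 1) * m + m = r * m by rewrite -mulSnr; congr (_ * _); lia.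
lia.
Qed.

Lemma lvlB (m r e a : nat) : 0 < m -> 0 < r -> m %| a -> a + m <= e ->
  e < a %/ (r * m) * (r * m) + r * m ->
  (e - 1) %/ (r * m) * (r * m) <= a < (e - 1) %/ (r * m) * (r * m) + (r - 1) * m.
Proof.
move=> m0 r0 da ae pe.
have [x [ha xr]] := @decomp m r a m0 r0 da.
have M0 : 0 < r * m by rewrite muln_gt0 r0.
have -> : (e - 1) %/ (r * m) = a %/ (r * m).
  apply: div_eq => //; apply/andP; split; lia.
have h2 : x.+1 * m < r * m by rewrite mulSn; lia.
rewrite ltn_mul2r in h2; case/andP: h2 => _ h2.
have h3 : x * m + m <= (r - 1) * m.
  rewrite -mulSnr leq_mul2r; apply/orP; right; lia.
lia.
Qed.

Lemma meas_pos ms i : hierarchy ms -> i < size ms -> 0 < meas ms i.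
Proof.
case=> sz srt lst _ _ ilt.
case: (ltnP i.+1 (size ms)) => h.
  have := (sortedP 0 srt) i h; rewrite /meas; lia.
have -> : i = (size ms).-1 by lia.
move: lst; rewrite (last_nth 0) /meas; case: ms sz {srt ilt h} => //= x s _ ->; by [].
Qed.

Lemma meas_fac ms i : hierarchy ms -> 0 < i < size ms ->
  meas ms i.-1 = (meas ms i.-1 %/ meas ms i) * meas ms i /\ 0 < meas ms i.-1 %/ meas ms i.
Proof.
move=> hh hi; have [_ _ _ hd _] := hh.
have m0 := @meas_pos ms i hh (proj2 (andP hi)).
have M0 : 0 < meas ms i.-1 by apply: (@meas_pos ms i.-1 hh); lia.
split; first by rewrite divnK // hd.
by rewrite divn_gt0 // dvdn_leq // hd.
Qed.

Lemma level_bound ms s e (i : 'I_(size ms)) : hierarchy ms -> s < e <= 1440 ->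
  #|[set a : 'I_1440 | (i, a) \in Hset ms s e]| <=
  (if val i == 0 then (e - s) %/ head 0 ms + 1 else 2 * (meas ms i.-1 %/ meas ms i - 1)).
Proof.
move=> hh hse.
have m0 := @meas_pos ms i hh (ltn_ord i).
case: eqP => [i0|ine].
  apply: (@mult_bound (meas ms i) (s %/ meas ms i * meas ms i)) => //; first exact: dvdn_mull.
  move=> a; rewrite !inE /= /is_block /in_range => /and3P[/andP[d _] /andP[h1 h2] _].
  have hm : meas ms i = head 0 ms by rewrite i0 /meas nth0.
  rewrite hm in d h2 m0 *; split=> //; apply/andP; split.
    exact: leq_trans (leq_trunc_div _ _) h1.
  exact: lvl0.
have hi : 0 < i < size ms by rewrite ltn_ord andbT lt0n; apply/eqP.
have [hM r0] := @meas_fac ms i hh hi.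
move: hM r0; set m := meas ms i; set r := meas ms i.-1 %/ m => hM r0.
have dM : m %| r * m by apply: dvdn_mull.
rewrite -(cardsID [set a : 'I_1440 | parent_start ms i a < s]) mul2n -addnn.
apply: leq_add.
  apply: (@mult_bound m (s %/ (r*m) * (r*m) + m)) => //.
    by apply: dvdn_add => //; apply: dvdn_mull.
  move=> a; rewrite !inE /= /is_block /in_range /parent_start -/m hM.
  move=> /andP[/and3P[/andP[d _] /andP[h1 h2] _] ps]; split=> //.
  exact: lvlA.
apply: (@mult_bound m ((e - 1) %/ (r*m) * (r*m))) => //.
  by apply: dvdn_mull.
move=> a; rewrite !inE /= /is_block /in_range /parent_start -/m hM.
move=> /andP[ps /and3P[/andP[d _] /andP[h1 h2] h3]]; split=> //.
apply: lvlB => //.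
move: h3; have -> : (val i == 0) = false by apply/eqP.
move: ps; lia.
Qed.

Theorem mainTheorem3 :
  (forall (ms : seq nat) (s e : nat),
     hierarchy ms -> s < e <= 1440 ->
     #|Hset ms s e| <= (e - s) %/ head 0 ms + 1 + Bconst ms)
  /\ Bconst [:: 240; 60; 15; 5; 1] = 24.
Proof.
split; last by rewrite /Bconst [size _]/=; do 4 rewrite big_ltn //; rewrite big_geq.
move=> ms s e hh hse.
have -> : #|Hset ms s e| = \sum_(i < size ms) #|[set a : 'I_1440 | (i, a) \in Hset ms s e]|.
  have := sum1_card (pred_of_set (Hset ms s e)); move=> <-.
  rewrite (eq_bigr (fun i : 'I_(size ms) => \sum_(a in [set a : 'I_1440 | (i,a) \in Hset ms s e]) 1)); last by move=> i _; rewrite sum1_card.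
  rewrite pair_big_dep; apply: eq_bigl => -[i a]. by rewrite /= !inE.
pose b := fun i : nat => if i == 0 then (e - s) %/ head 0 ms + 1 else 2 * (meas ms i.-1 %/ meas ms i - 1).
apply: (@leq_trans (\sum_(i < size ms) b i)).
  by apply: leq_sum => i _; apply: level_bound.
have sz : 0 < size ms by case: hh.
rewrite -(big_mkord xpredT b) big_ltn //.
rewrite /Bconst big_distrr /= leq_add2l.
by rewrite leq_eqVlt; apply/orP; left; apply/eqP; apply: eq_big_nat => i /andP[hi _]; rewrite /b; case: i hi.
Qed.
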